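(* Let $M=p_1^{n_1}\cdots p_K^{n_K}$ with distinct primes and $n_\nu\in\mathbb{N}$, and let $A\oplus B=\mathbb{Z}_M$. Fix distinct $i,j\in\{1,\dots,K\}$, let $z\in\mathbb{Z}_M$, and let $\Lambda=\Lambda(z,M/(p_ip_j))$. Let $a\in A$, $b\in B$ satisfy $a+b=z$. Then there exists $\nu\in\{i,j\}$ such that $\Sigma_A(\Lambda)\subset A\cap\Pi(a,p_\nu^{n_\nu-1})$ and $\Sigma_B(\Lambda)\subset B\cap\Pi(b,p_\nu^{n_\nu-1})$.
   Context: $A\oplus B=\mathbb{Z}_M$ means every element of $\mathbb{Z}_M$ is uniquely $a+b$ with $a\in A$, $b\in B$. For $d\mid M$, $\Lambda(x,d)=\{x'\in\mathbb{Z}_M: d\mid x-x'\}$, and $\Pi(x,p^\alpha)=\Lambda(x,p^\alpha)$. For $Z\subset\mathbb{Z}_M$, $\Sigma_A(Z)=\{a\in A:a+b\in Z\text{ for some }b\in B\}$, $\Sigma_B(Z)=\{b\in B:a+b\in Z\text{ for some }a\in A\}$. *)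

(* Defs.v *)
(* Z_M is modelled by 'Z_M (the statement forces M >= 2). *)
From mathcomp Require Import all_boot all_order all_algebra.
Set Implicit Arguments. Unset Strict Implicit. Unset Printing Implicit Defensive.
Import GRing.Theory.
Local Open Scope ring_scope.

Definition tiling (M : nat) (A B : {set 'Z_M}) : Prop :=
  forall x : 'Z_M, exists! ab : 'Z_M * 'Z_M,
    [/\ ab.1 \in A, ab.2 \in B & ab.1 + ab.2 = x].

(* Lambda(x,d) = { x' in Z_M : d | x - x' }  (difference taken in Z_M,
   represented by its residue in [0, M)). *)
Definition Lam (M d : nat) (x : 'Z_M) : {set 'Z_M} :=
  [set x' : 'Z_M | (d %| nat_of_ord (x - x')%R)%N].

Definition Pi (M q : nat) (x : 'Z_M) : {set 'Z_M} := @Lam M q x.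

Definition SigmaA (M : nat) (A B Z : {set 'Z_M}) : {set 'Z_M} :=
  [set a in A | [exists b in B, a + b \in Z]].

Definition SigmaB (M : nat) (A B Z : {set 'Z_M}) : {set 'Z_M} :=
  [set b in B | [exists a in A, a + b \in Z]].
Arguments Lam M d x : clear implicits.
Arguments Pi M q x : clear implicits.

(* Main.v *)
Require Import Defs.
From mathcomp Require Import all_boot all_order all_algebra all_fingroup all_solvable.
From mathcomp Require Import ring.
Set Implicit Arguments. Unset Strict Implicit. Unset Printing Implicit Defensive.
Import GRing.Theory.
Local Open Scope ring_scope.



Lemma ZpM_card (M : nat) : (1 < M)%N -> #|'Z_M| = M.
Proof. by move=> hM; rewrite card_ord Zp_cast. Qed.

Lemma ZpM_valD (M : nat) (x y : 'Z_M) : (1 < M)%N ->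
  nat_of_ord (x + y) = ((nat_of_ord x + nat_of_ord y) %% M)%N.
Proof.
move=> hM; have -> : x + y = ((nat_of_ord x + nat_of_ord y)%N)%:R.
  by rewrite natrD !natr_Zp.
by rewrite val_Zp_nat.
Qed.

Lemma ZpM_dvd_sub (M q : nat) (x y : 'Z_M) : (1 < M)%N -> (q %| M)%N ->
  (q %| nat_of_ord (x - y)%R)%N = (nat_of_ord x == nat_of_ord y %[mod q])%N.
Proof.
move=> hM hq.
have hx : (nat_of_ord x = (nat_of_ord (x - y)%R + nat_of_ord y) %[mod q])%N.
  by rewrite -[in RHS](modn_dvdm _ hq) -(ZpM_valD _ _ hM) subrK.
rewrite hx -{2}(add0n (nat_of_ord y)) eqn_modDr /dvdn mod0n //.
Qed.

Lemma tiling_card (M : nat) (A B : {set 'Z_M}) : (1 < M)%N -> tiling A B ->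
  (#|A| * #|B|)%N = M.
Proof.
move=> hM hAB.
have Himg : [set (fun ab : 'Z_M * 'Z_M => ab.1 + ab.2) ab | ab in setX A B] = [set: 'Z_M].
  apply/eqP; rewrite eqEsubset subsetT /=.
  apply/subsetP => x _; have [ab [[h1 h2 h3] _]] := hAB x.
  by apply/imsetP; exists ab => //; rewrite inE h1 h2.
rewrite -cardsX; apply: etrans (ZpM_card hM); rewrite -cardsT -Himg card_in_imset //.
move=> ab ab'; rewrite !inE => /andP[h1 h2] /andP[h1' h2'] /= heq.
have [c [_ hu]] := hAB (ab.1 + ab.2).
by rewrite -(hu ab) ?(hu ab') //; split.
Qed.

Lemma zaux (V : zmodType) (a x s : V) : a + (x - (a + s)) = x - s.
Proof. by rewrite addrCA opprD addNKr. Qed.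




Lemma rot_inj (p M : nat) : injective (fun f : {ffun 'Z_p -> 'Z_M} => [ffun i => f (i + 1)]).
Proof.
move=> f g /ffunP h; apply/ffunP => i; have := h (i - 1); by rewrite !ffunE subrK.
Qed.

Lemma fix_count (M p : nat) (A B : {set 'Z_M}) (x : 'Z_M) : prime p ->
  let S := [set f : {ffun 'Z_p -> 'Z_M} | [forall i, f i \in A] && (x - \sum_i f i \in B)] in
  #|S| = #|[set a in A | x - a *+ p \in B]| %[mod p].
Proof.
move=> hp S.
have hp1 : (1 < p)%N by apply: prime_gt1.
have cardI : #|'Z_p| = p by rewrite card_ord Zp_cast.
pose s := perm (@rot_inj p M).
have hs1 : forall f, s f = [ffun i => f (i + 1)] by move=> f; rewrite permE.
have hsk : forall k f, (s ^+ k)%g f = [ffun i => f (i + k%:R)].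
  elim=> [|k IH] f.
    by rewrite expg0 perm1; apply/ffunP => i; rewrite ffunE addr0.
  rewrite expgSr permM IH permE; apply/ffunP => i; rewrite !ffunE.
  by rewrite mulrS addrA.
have hsp : (s ^+ p)%g = 1%g.
  apply/permP => f; rewrite hsk perm1; apply/ffunP => i.
  by rewrite ffunE pchar_Zp // addr0.
have pG : (p.-group <[s]>)%g.
  have h : (#[s]%g %| p)%N by rewrite order_dvdn hsp eqxx.
  exact: pnat_dvd h (pnat_id hp).
have sumrot : forall f : {ffun 'Z_p -> 'Z_M}, \sum_i f (i + 1) = \sum_i f i.
  by move=> f; rewrite [RHS](reindex_inj (addIr 1)).
have acts : [acts <[s]>%g, on S | 'P].
  rewrite cycle_subG; apply/astabsP => f /=.
  have -> : aperm f s = [ffun i => f (i + 1)] by exact: hs1 f. rewrite !inE.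
  congr (_ && _).
    apply/forallP/forallP => H i.
      by have := H (i - 1); rewrite ffunE subrK.
    by rewrite ffunE.
  congr (x - _ \in B).
  by rewrite -(sumrot f); apply: eq_bigr => i _; rewrite ffunE.
rewrite (pgroup_fix_mod pG acts) afix_cycle.
congr (_ %% p)%N.
have -> : (S :&: 'Fix_'P[s])%g = [set [ffun=> a] | a in [set a in A | x - a *+ p \in B]].
  apply/eqP; rewrite eqEsubset; apply/andP; split; apply/subsetP => f.
    rewrite inE => /andP [hf /afix1P /= hfix].
    have {}hfix : [ffun i => f (i + 1)] = f := etrans (esym (hs1 f)) hfix.
    have hk : forall k : nat, f (k%:R) = f 0.
      elim=> [|k IH] //; rewrite mulrS addrC.
      by rewrite -IH -{2}hfix ffunE.
    have hc : f = [ffun=> f 0].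
      by apply/ffunP => i; rewrite ffunE -(natr_Zp i) hk.
    move: hf; rewrite inE hc => /andP [/forallP hA hB].
    apply/imsetP; exists (f 0) => //.
    have := hA 0; rewrite ffunE => hA0; rewrite inE hA0 /=.
    move: hB; rewrite /=.
    under eq_bigr do rewrite ffunE.
    by rewrite sumr_const cardI.
  move=> /imsetP [a]; rewrite inE => /andP [ha hb] ->.
  rewrite inE; apply/andP; split.
    rewrite inE; apply/andP; split.
      by apply/forallP => i; rewrite ffunE.
    under eq_bigr do rewrite ffunE.
    by rewrite sumr_const cardI.
  apply/afix1P => /=; apply: etrans (hs1 _) _; apply/ffunP => i; by rewrite !ffunE.
rewrite card_imset // => a b /ffunP h; have := h 0; by rewrite !ffunE.
Qed.



Lemma S_count (M p : nat) (A B : {set 'Z_M}) (x : 'Z_M) : prime p -> tiling A B ->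
  let S := [set f : {ffun 'Z_p -> 'Z_M} | [forall i, f i \in A] && (x - \sum_i f i \in B)] in
  #|S| = (#|A| ^ p.-1)%N.
Proof.
move=> hp hAB S.
have hp1 : (1 < p)%N by apply: prime_gt1.
have cardI : #|'Z_p| = p by rewrite card_ord Zp_cast.
pose phi (f : {ffun 'Z_p -> 'Z_M}) := [ffun i => if i == 0 then 0 else f i].
pose F := fun i : 'Z_p => (fun y : 'Z_M => if i == 0 then y == 0 else y \in A).
have sumD : forall f : {ffun 'Z_p -> 'Z_M}, \sum_i f i = f 0 + \sum_(i | i != 0) f i.
  by move=> f; rewrite (bigD1 0).
have sumphi : forall f, \sum_(i | i != 0) phi f i = \sum_(i | i != 0) f i.
  by move=> f; apply: eq_bigr => i /negbTE hi; rewrite ffunE hi.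
have inj : {in S &, injective phi}.
  move=> f g; rewrite !inE => /andP [/forallP hfA hfB] /andP [/forallP hgA hgB] /ffunP h.
  have hne : forall i, i != 0 -> f i = g i.
    by move=> i /negbTE hi; have := h i; rewrite !ffunE hi.
  have hs : \sum_(i | i != 0) f i = \sum_(i | i != 0) g i by rewrite -(sumphi f) -(sumphi g); apply: eq_bigr => i _; rewrite h.
  have h0 : f 0 = g 0.
    move: hfB hgB; rewrite !sumD -hs => hfB hgB.
    have [c [_ hu]] := hAB (x - \sum_(i | i != 0) f i).
    have e1 := hu (f 0, x - (f 0 + \sum_(i | i != 0) f i)) (And3 (hfA 0) hfB (zaux _ _ _)).
    have e2 := hu (g 0, x - (g 0 + \sum_(i | i != 0) f i)) (And3 (hgA 0) hgB (zaux _ _ _)).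
    by have := congr1 fst (etrans (esym e1) e2).
  apply/ffunP => i; case: (eqVneq i 0) => [->|hi] //; exact: hne.
have himg : [set phi f | f in S] = [set g | g \in family F].
  apply/eqP; rewrite eqEsubset; apply/andP; split; apply/subsetP => g.
    move=> /imsetP [f]; rewrite inE => /andP [/forallP hfA _] ->.
    rewrite inE; apply/familyP => i; rewrite /F ffunE.
    by case: (i == 0) => //.
  rewrite inE => /familyP hg.
  have hg0 : g 0 = 0 by have := hg 0; rewrite /F eqxx => /eqP.
  have [[a b] [[ha hb hab] _]] := hAB (x - \sum_(i | i != 0) g i).
  apply/imsetP; exists [ffun i => if i == 0 then a else g i].
    rewrite inE; apply/andP; split.
      apply/forallP => i; rewrite ffunE; case: (eqVneq i 0) => [_|hi] //.
      by have := hg i; rewrite /F (negbTE hi).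
    rewrite sumD ffunE eqxx.
    have -> : \sum_(i | i != 0) [ffun i => if i == 0 then a else g i] i = \sum_(i | i != 0) g i.
      by apply: eq_bigr => i /negbTE hi; rewrite ffunE hi.
    suff -> : x - (a + \sum_(i | i != 0) g i) = b by [].
    rewrite /= in hab.
    have -> : b = x - \sum_(i | i != 0) g i - a by rewrite -hab addrC addKr.
    by rewrite opprD addrA addrAC.
  apply/ffunP => i; rewrite !ffunE; case: (eqVneq i 0) => [->|hi] //.
rewrite -(card_in_imset inj) himg cardsE card_family foldrE big_image /=.
rewrite (bigD1 0) //= /F eqxx card1 mul1n.
rewrite (eq_bigr (fun _ => #|A|)); last first.
  by move=> i /negbTE hi; rewrite hi; apply: eq_card => y.
by rewrite prod_nat_const cardC1 cardI.
Qed.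



Lemma tij_prime (M p : nat) (A B : {set 'Z_M}) : (1 < M)%N -> prime p -> coprime p M ->
  tiling A B -> tiling [set a *+ p | a in A] B.
Proof.
move=> hM hp hpM hAB.
pose NS (x : 'Z_M) := [set a in A | x - a *+ p \in B].
have hcard := tiling_card hM hAB.
have hpos : forall x, (0 < #|NS x|)%N.
  move=> x; have h1 := @fix_count M p A B x hp; have h2 := @S_count M p A B x hp hAB.
  rewrite /= h2 in h1.
  rewrite lt0n; apply/negP => /eqP h0.
  move: h1; rewrite /NS h0 mod0n => /eqP; rewrite -/(dvdn p _) Euclid_dvdX // => /andP [hpA _].
  move: hpM; rewrite prime_coprime // -hcard => /negP; apply.
  exact: dvdn_mulr.
have hsum : (\sum_x #|NS x|)%N = M.
  have hNS : forall x, #|NS x| = (\sum_(a in A) ((x - a *+ p)%R \in B))%N.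
    move=> x; rewrite -sum1_card (eq_bigl (fun a => (a \in A) && (x - a *+ p \in B))); last first.
      by move=> a; rewrite !inE.
    rewrite big_mkcondr /=; apply: eq_bigr => a _; by case: (_ \in B).
  rewrite (eq_bigr _ (fun x _ => hNS x)) exchange_big /=; apply: etrans hcard; rewrite -sum_nat_const.
  have inner : forall c : 'Z_M, (\sum_(y : 'Z_M) ((y - c)%R \in B))%N = #|B|.
    move=> c; rewrite (reindex_inj (addIr c)) /=.
    under eq_bigr do rewrite addrK.
    rewrite -sum1_card [RHS]big_mkcond /=; apply: eq_bigr => y _; by case: (y \in B).
  by under eq_bigr => a _ do rewrite inner.
have hone : forall x, #|NS x| = 1%N.
  have h : (\sum_x (#|NS x| - 1))%N = 0%N.
    rewrite sumnB; last by move=> x _; exact: hpos.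
    by rewrite hsum sum1_card ZpM_card // subnn.
  move=> x; move/eqP: h; rewrite sum_nat_eq0 => /forallP /(_ x) /=.
  by have := hpos x; case: #|NS x| => [|[|n]].
move=> x; have /cards1P [a ha] : #|NS x| == 1%N by rewrite hone.
have haN : a \in NS x by rewrite ha set11.
move: (haN); rewrite inE => /andP [haA haB].
exists (a *+ p, x - a *+ p); split.
  by split => //=; [apply: imset_f | rewrite addrC subrK].
move=> [c b] [/imsetP [a' ha' hca] hb /= hc]; rewrite /= in hb hca; subst c.
have : a' \in NS x by rewrite inE ha' -hc (addrC (a' *+ p)) addrK hb.
by rewrite ha inE => /eqP ea; subst a'; rewrite -hc (addrC (a *+ p)) addrK.
Qed.

Lemma tij (M u : nat) (A B : {set 'Z_M}) : (1 < M)%N -> coprime u M ->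
  tiling A B -> tiling [set a *+ u | a in A] B.
Proof.
move=> hM; elim: u {-2}u (leqnn u) A B => [|n IH] u hu A B.
  by rewrite leqn0 in hu; rewrite (eqP hu) /coprime gcd0n => /eqP h; rewrite h in hM.
case: (ltngtP u 1) => [hu0|hu1|->] hcop hAB.
- by rewrite ltnS leqn0 in hu0; rewrite (eqP hu0) /coprime gcd0n in hcop; rewrite (eqP hcop) in hM.
- have hpr := pdiv_prime hu1.
  have hdv := pdiv_dvd u.
  have hq : u = (pdiv u * (u %/ pdiv u))%N by rewrite mulnC divnK.
  have hcp : coprime (pdiv u) M by apply: coprime_dvdl hcop.
  have hcq : coprime (u %/ pdiv u) M.
    by apply: coprime_dvdl hcop; apply/dvdnP; exists (pdiv u).
  have hlt : (u %/ pdiv u < u)%N.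
    exact: ltn_Pdiv (prime_gt1 hpr) (ltnW hu1).
  have := tij_prime hM hpr hcp (IH _ (leq_trans (leq_trans hlt hu) (leqnn _)) A B hcq hAB).
  rewrite -imset_comp.
  have -> : [set ((fun x => x *+ pdiv u) \o (fun a => a *+ (u %/ pdiv u))) x | x in A]
          = [set a *+ u | a in A].
    by apply: eq_imset => a /=; rewrite -mulrnA divnK.
  by [].
- have -> : [set a *+ 1 | a in A] = A.
    by rewrite (eq_imset _ (fun a => mulr1n a)) imset_id.
  exact: hAB.
Qed.



Lemma no_unit_rel (M u : nat) (A B : {set 'Z_M}) (a1 a2 b1 b2 : 'Z_M) :
  (1 < M)%N -> coprime u M -> tiling A B -> a1 \in A -> a2 \in A -> b1 \in B -> b2 \in B ->
  (a1 - a2) *+ u = b2 - b1 -> a1 = a2.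
Proof.
move=> hM hu hAB h1 h2 h3 h4 heq.
have hT := tij hM hu hAB.
have hs : a2 *+ u + b2 = a1 *+ u + b1.
  rewrite mulrnBl in heq; move: heq.
  set x1 := a1 *+ u; set x2 := a2 *+ u => heq.
  apply/eqP; rewrite -subr_eq0; apply/eqP.
  transitivity ((b2 - b1) - (x1 - x2)); first ring.
  by rewrite heq subrr.
have [c [_ hc]] := hT (a1 *+ u + b1).
have e1 := hc (a1 *+ u, b1) (And3 (imset_f _ h1) h3 erefl).
have e2 := hc (a2 *+ u, b2) (And3 (imset_f _ h2) h4 hs).
have e := congr1 fst (etrans (esym e1) e2); rewrite /= in e.
have hun : (u%:R : 'Z_M) \is a GRing.unit by rewrite unitZpE // coprime_sym.
by apply: (mulIr hun); rewrite -[a1 *+ u]mulr_natr -[a2 *+ u]mulr_natr in e.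
Qed.

Lemma coprime_1add (x d : nat) : (d %| x)%N -> coprime (1 + x) d.
Proof.
move=> /dvdnP [k ->]; rewrite -coprime_modl addnC modnMDl coprime_modl; exact: coprime1n.
Qed.

Lemma core (M pi pj ni nj R : nat) (A B : {set 'Z_M}) (a1 a2 b1 b2 : 'Z_M) :
  prime pi -> prime pj -> pi != pj -> (0 < ni)%N -> (0 < nj)%N ->
  coprime R pi -> coprime R pj ->
  M = (pi ^ ni * pj ^ nj * R)%N -> tiling A B ->
  a1 \in A -> a2 \in A -> b1 \in B -> b2 \in B ->
  (pi ^ ni.-1 * pj ^ nj.-1 * R %| nat_of_ord ((b2 - b1) - (a1 - a2))%R)%N ->
  (pi ^ ni.-1 %| nat_of_ord (a1 - a2)%R)%N || (pj ^ nj.-1 %| nat_of_ord (a1 - a2)%R)%N.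
Proof.
move=> hpi hpj hneq hni hnj hRi hRj hMe hAB h1 h2 h3 h4 hm.
have hR0 : (0 < R)%N.
  rewrite lt0n; apply/negP => /eqP h0; move: hRi; rewrite h0 /coprime gcd0n => /eqP h.
  by move: (prime_gt1 hpi); rewrite h.
have hM : (1 < M)%N.
  rewrite hMe; apply: (@leq_trans (pi ^ ni)).
    by rewrite -{1}(expn0 pi) ltn_exp2l ?prime_gt1.
  rewrite -mulnA leq_pmulr // muln_gt0 hR0 expn_gt0 prime_gt0 //.
set X := nat_of_ord (a1 - a2).
apply/negPn/negP => hnd; rewrite negb_or in hnd; case/andP: hnd => hnX1 hnX2.
have hX0 : (0 < X)%N.
  by rewrite lt0n; apply/negP => /eqP h0; rewrite h0 dvdn0 in hnX1.
have [X1 hcX1 eX] := pfactor_coprime hpi hX0.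
set al := logn pi X in eX.
have hX1 : (0 < X1)%N by move: hX0; rewrite eX muln_gt0 => /andP [].
have [X2 hcX2 eX1] := pfactor_coprime hpj hX1.
set be := logn pj X1 in eX1.
have hX2 : (0 < X2)%N by move: hX1; rewrite eX1 muln_gt0 => /andP [].
have hcX2i : coprime pi X2.
  by apply: coprime_dvdr hcX1; rewrite eX1 dvdn_mulr.
have hal : (al < ni.-1)%N.
  rewrite ltnNge; apply/negP => hle; move/negP: hnX1; apply.
  by rewrite eX; apply: dvdn_mull; apply: dvdn_exp2l.
have hbe : (be < nj.-1)%N.
  rewrite ltnNge; apply/negP => hle; move/negP: hnX2; apply.
  rewrite eX eX1 -mulnA; apply: dvdn_mull; apply: dvdn_mulr; exact: dvdn_exp2l.
set m := (pi ^ ni.-1 * pj ^ nj.-1 * R)%N.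
set L := (pi ^ (ni.-1 - al) * pj ^ (nj.-1 - be) * R)%N.
have hLX : (L * X = m * X2)%N.
  have e1 : (pi ^ ni.-1 = pi ^ (ni.-1 - al) * pi ^ al)%N by rewrite -expnD subnK // ltnW.
  have e2 : (pj ^ nj.-1 = pj ^ (nj.-1 - be) * pj ^ be)%N by rewrite -expnD subnK // ltnW.
  rewrite /m /L e1 e2 eX eX1; ring.
set N := (pi * pj)%N.
have hMm : (m * N)%N = M.
  rewrite hMe /m /N -{2}(prednK hni) -{2}(prednK hnj) !expnSr; ring.
have hcN : coprime X2 N by rewrite /N coprimeMr !(coprime_sym X2) hcX2i hcX2.
case: (egcdnP N hX2) => km kn hk _.
rewrite (eqP hcN) in hk.
set D := nat_of_ord ((b2 - b1) - (a1 - a2)).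
have eD : D = (D %/ m * m)%N by rewrite divnK.
set t := (D %/ m)%N in eD.
set u := (1 + km * t * L)%N.
have hdL : forall d, (d %| L)%N -> coprime u d.
  by move=> d hd; apply: coprime_1add; apply: dvdn_mull.
have hu : coprime u M.
  rewrite hMe !coprimeMr; apply/andP; split; [apply/andP; split|].
  - apply: coprimeXr; apply: hdL; rewrite /L -mulnA; apply: dvdn_mulr.
    by apply: dvdn_exp => //; rewrite subn_gt0.
  - apply: coprimeXr; apply: hdL; rewrite /L (mulnC (pi ^ _)%N) -mulnA; apply: dvdn_mulr.
    by apply: dvdn_exp => //; rewrite subn_gt0.
  - by apply: hdL; apply: dvdn_mull.
have ea : a1 - a2 = X%:R by rewrite natr_Zp.
have eY : (b2 - b1) - (a1 - a2) = (t * m)%:R by rewrite -eD natr_Zp.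
have hnat : (X * (km * t * L) = t * m + t * kn * M)%N.
  transitivity (km * t * (L * X))%N; first ring.
  rewrite hLX; transitivity (t * m * (km * X2))%N; first ring.
  rewrite hk -hMm; ring.
have heq : (a1 - a2) *+ u = b2 - b1.
  rewrite /u mulrnDr mulr1n.
  have -> : (a1 - a2) *+ (km * t * L) = (X * (km * t * L))%:R.
    by rewrite {1}ea natrM mulr_natr.
  rewrite hnat natrD (natrM _ (t * kn)%N M) (pchar_Zp hM) mulr0 addr0 -eY.
  by rewrite addrC subrK.
have := no_unit_rel hM hu hAB h1 h2 h3 h4 heq.
move/eqP; rewrite -subr_eq0 => /eqP h0.
by move: hX0; rewrite /X h0.
Qed.



Theorem lemma7p1 (K : nat) (p n : 'I_K -> nat) (M : nat)
    (hp : forall nu, prime (p nu)) (hpinj : injective p)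
    (hn : forall nu, (0 < n nu)%N)
    (hM : M = (\prod_(nu < K) p nu ^ n nu)%N)
    (A B : {set 'Z_M}) (hAB : tiling A B)
    (i j : 'I_K) (hij : i != j) (z : 'Z_M) (a b : 'Z_M)
    (ha : a \in A) (hb : b \in B) (hz : a + b = z) :
  let Lambda := Lam M (M %/ (p i * p j))%N z in
  exists nu : 'I_K, (nu = i \/ nu = j) /\
    SigmaA A B Lambda \subset A :&: Pi M (p nu ^ (n nu).-1)%N a /\
    SigmaB A B Lambda \subset B :&: Pi M (p nu ^ (n nu).-1)%N b.
Proof.
move=> Lambda.
have hpi := hp i; have hpj := hp j.
have hneq : p i != p j by apply: contra hij => /eqP /hpinj ->.
set R := (\prod_(k | (k != i) && (k != j)) p k ^ n k)%N.
have hMe : M = (p i ^ n i * p j ^ n j * R)%N.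
  by rewrite hM (bigD1 i) //= (bigD1 j) //= ?mulnA // eq_sym.
have hRc : forall l, (l = i \/ l = j) -> coprime R (p l).
  move=> l hl; apply: (big_ind (fun x => coprime x (p l))).
  - exact: coprime1n.
  - by move=> x y hx hy; rewrite coprimeMl hx hy.
  move=> k /andP [hki hkj]; apply: coprimeXl.
  rewrite prime_coprime // dvdn_prime2 //; apply/negP => /eqP /hpinj hkl.
  by case: hl => hl; subst; rewrite eqxx in hki hkj.
have hRi := hRc i (or_introl erefl); have hRj := hRc j (or_intror erefl).
have hR0 : (0 < R)%N.
  rewrite lt0n; apply/negP => /eqP h0; move: hRi; rewrite h0 /coprime gcd0n => /eqP h.
  by move: (prime_gt1 hpi); rewrite h.
have hM1 : (1 < M)%N.
  rewrite hMe; apply: (@leq_trans (p i ^ n i)).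
    by rewrite -{1}(expn0 (p i)) ltn_exp2l ?prime_gt1.
  rewrite -mulnA leq_pmulr // muln_gt0 hR0 expn_gt0 prime_gt0 //.
set m0 := (p i ^ (n i).-1 * p j ^ (n j).-1 * R)%N.
have hMm : M = (m0 * (p i * p j))%N.
  rewrite hMe /m0 -{1}(prednK (hn i)) -{1}(prednK (hn j)) !expnSr; ring.
have hm : (M %/ (p i * p j) = m0)%N.
  by rewrite {1}hMm mulnK // muln_gt0 !prime_gt0.
have hm0M : (m0 %| M)%N by rewrite hMm dvdn_mulr.
pose q l := (p l ^ (n l).-1)%N.
have hqm : forall l, (l = i \/ l = j) -> (q l %| m0)%N.
  move=> l [] ->; rewrite /q /m0.
    by rewrite -mulnA dvdn_mulr.
  by rewrite (mulnC (p i ^ _)%N) -mulnA dvdn_mulr.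
have hqM : forall l, (l = i \/ l = j) -> (q l %| M)%N.
  by move=> l hl; apply: dvdn_trans (hqm l hl) hm0M.
have hLam : forall x, (x \in Lambda) = (m0 %| nat_of_ord (z - x)%R)%N.
  by move=> x; rewrite /Lambda /Lam inE hm.
have hdiff : forall a1 b1 a2 b2, a1 + b1 \in Lambda -> a2 + b2 \in Lambda ->
    (m0 %| nat_of_ord ((b2 - b1) - (a1 - a2))%R)%N.
  move=> a1 b1 a2 b2; rewrite !hLam => h1 h2.
  have -> : (b2 - b1) - (a1 - a2) = (z - (a1 + b1)) - (z - (a2 + b2)) by ring.
  rewrite ZpM_dvd_sub //; apply/eqP.
  by move: h1 h2; rewrite /dvdn => /eqP -> /eqP ->.
set SA := SigmaA A B Lambda.
set SB := SigmaB A B Lambda.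
have hSA : forall a', a' \in SA -> a' \in A /\ exists2 b', b' \in B & a' + b' \in Lambda.
  by move=> a'; rewrite /SA /SigmaA inE => /andP [h /exists_inP [b' hb' hab]]; split => //; exists b'.
have KLA : forall a1 a2, a1 \in SA -> a2 \in SA ->
    (nat_of_ord a1 == nat_of_ord a2 %[mod q i])%N || (nat_of_ord a1 == nat_of_ord a2 %[mod q j])%N.
  move=> a1 a2 /hSA [h1 [b1 hb1 hl1]] /hSA [h2 [b2 hb2 hl2]].
  have hqMi := hqM i (or_introl erefl); have hqMj := hqM j (or_intror erefl).
  rewrite -!ZpM_dvd_sub //.
  apply: (core hpi hpj hneq (hn i) (hn j) hRi hRj hMe hAB h1 h2 hb1 hb2).
  exact: hdiff hl1 hl2.
have haSA : a \in SA.
  rewrite /SA /SigmaA inE ha; apply/exists_inP; exists b => //.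
  by rewrite hz hLam subrr dvdn0.
have fin : forall nu, (nu = i \/ nu = j) ->
    {in SA, forall a', (nat_of_ord a == nat_of_ord a' %[mod q nu])%N} ->
    SA \subset A :&: Pi M (p nu ^ (n nu).-1)%N a /\
    SB \subset B :&: Pi M (p nu ^ (n nu).-1)%N b.
  move=> nu hnu H; have hqMn := hqM nu hnu; split; apply/subsetP => x hx.
    have [hxA _] := hSA x hx.
    by rewrite inE hxA /Pi /Lam inE ZpM_dvd_sub //; exact: H.
  move: hx; rewrite /SB /SigmaB inE => /andP [hxB /exists_inP [a' ha' hl]].
  have ha'SA : a' \in SA by rewrite /SA /SigmaA inE ha'; apply/exists_inP; exists x.
  have habz : a + b \in Lambda by rewrite hz hLam subrr dvdn0.
  have hd := dvdn_trans (hqm nu hnu) (hdiff a b a' x habz hl).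
  rewrite inE hxB /Pi /Lam inE.
  have hqa : (q nu %| nat_of_ord (a - a')%R)%N by rewrite ZpM_dvd_sub //; exact: H.
  rewrite ZpM_dvd_sub // in hd.
  rewrite /dvdn in hqa; rewrite (eqP hqa) in hd.
  have : (q nu %| nat_of_ord (x - b)%R)%N by rewrite /dvdn; exact: hd.
  rewrite !ZpM_dvd_sub //.
  by rewrite eq_sym.
case: (boolP [forall a', (a' \in SA) ==> (nat_of_ord a == nat_of_ord a' %[mod q i])%N]).
  move=> /forallP H; exists i; split; first by left.
  by apply: fin; [left | move=> a' ha'; have := H a'; rewrite ha'].
move=> /forallPn [a1]; rewrite negb_imply => /andP [ha1 hn1].
have hj1 : (nat_of_ord a == nat_of_ord a1 %[mod q j])%N.
  by have := KLA a a1 haSA ha1; rewrite (negbTE hn1).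
exists j; split; first by right.
apply: fin; first by right.
move=> a2 ha2; apply/negPn/negP => hn2.
have hi2 : (nat_of_ord a == nat_of_ord a2 %[mod q i])%N.
  by have := KLA a a2 haSA ha2; rewrite (negbTE hn2) orbF.
case/orP: (KLA a1 a2 ha1 ha2) => /eqP h.
  by move/negP: hn1; apply; rewrite (eqP hi2) h.
by move/negP: hn2; apply; rewrite (eqP hj1) h.
Qed.
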